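(* Let $\mathcal{H}=\mathbb{C}^2$ and let $\mathcal{L}=(\tilde H,\Gamma)$ be a minimally degenerate dephasing Lindbladian on $\mathcal{B}(\mathcal{H})$. Then there exist a non-degenerate, traceless self-adjoint operator $H$ on $\mathbb{C}^2$ and a real number $\gamma\geq 0$ such that $$\mathcal{L}=\mathcal{L}_0+\frac{\gamma}{2}\mathcal{D},\qquad \mathcal{L}_0\rho=-i[H,\rho],\qquad \mathcal{D}\rho=-[\sqrt{H},[\sqrt{H},\rho]],$$ where $\sqrt{H}:=\operatorname{sgn}(H)\sqrt{|H|}$ (functional calculus). Moreover, if $\mathcal{L}=\mathcal{L}_s$ depends smoothly on a real parameter $s$ (i.e. $\tilde H_s$ and the $\Gamma_{\alpha,s}$ are smooth in $s$), then $H_s$ and $\gamma_s$ in this representation depend smoothly on $s$ as well.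
   Context: For a finite-dimensional Hilbert space $\mathcal{H}$, a Lindbladian $\mathcal{L}=(\tilde H,\Gamma)$ is the super-operator on $\mathcal{B}(\mathcal{H})$ given by $\mathcal{L}\rho=-i[\tilde H,\rho]+\sum_{\alpha\in I}\big(\Gamma_\alpha\rho\Gamma_\alpha^*-\tfrac12(\Gamma_\alpha^*\Gamma_\alpha\rho+\rho\Gamma_\alpha^*\Gamma_\alpha)\big)$, where $\tilde H=\tilde H^*$, $I$ is a finite index set and $\Gamma_\alpha$ are operators on $\mathcal{H}$. It is called dephasing if $\Gamma_\alpha=f_\alpha(\tilde H)$ for bounded Borel functions $f_\alpha$. A dephasing Lindbladian on an $n$-dimensional space has a kernel of dimension at least $n$; it is called minimally degenerate if each of its eigenvalues is minimally degenerate, i.e. the kernel has dimension exactly $n$ and every nonzero eigenvalue of $\mathcal{L}$ is simple. *)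

(* Defs.v *)
From HB Require Import structures.
From mathcomp Require Import all_boot all_order all_algebra.
From mathcomp Require Import all_classical all_reals all_analysis.
From mathcomp.real_closed Require Import complex.

Set Implicit Arguments.
Unset Strict Implicit.
Unset Printing Implicit Defensive.

Import Order.TTheory GRing.Theory Num.Theory.
Local Open Scope ring_scope.

Section LindbladDefs.
Variable R : realType.
Local Notation C := R[i].

Definition ofR (x : R) : C := (x%:C)%C.

Definition adjmx n (A : 'M[C]_n) : 'M[C]_n := (map_mx Num.conj A)^T.

Definition hermitian n (A : 'M[C]_n) : Prop := adjmx A = A.

Definition unitary n (U : 'M[C]_n) : Prop := U *m adjmx U = 1%:M.

Definition fcalc n (A : 'M[C]_n) (f : R -> C) (B : 'M[C]_n) : Prop :=
  exists (U : 'M[C]_n) (d : 'rV[R]_n),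
    [/\ unitary U,
        A = U *m diag_mx (map_mx ofR d) *m adjmx U &
        B = U *m diag_mx (\row_j f (d 0 j)) *m adjmx U].

Definition commmx n (A B : 'M[C]_n) : 'M[C]_n := A *m B - B *m A.

Definition lindblad n (I : finType) (Ht : 'M[C]_n) (G : I -> 'M[C]_n)
    (rho : 'M[C]_n) : 'M[C]_n :=
  - (Complex 0 1) *: commmx Ht rho
  + \sum_(a : I) (G a *m rho *m adjmx (G a)
                  - 2^-1 *: (adjmx (G a) *m G a *m rho + rho *m (adjmx (G a) *m G a))).

Definition dephasing n (I : finType) (Ht : 'M[C]_n) (G : I -> 'M[C]_n) : Prop :=
  hermitian Ht /\ forall a : I, exists f : R -> C, fcalc Ht f (G a).

(* Matrix of a super-operator on B(C^n) = 'M_n (acting on row vectors mxvec rho). *)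
Definition supermx n (L : 'M[C]_n -> 'M[C]_n) : 'M[C]_(n * n) := lin_mx L.

Definition min_degenerate n (L : 'M[C]_n -> 'M[C]_n) : Prop :=
  \rank (kermx (supermx L)) = n /\
  forall a : C, a != 0 -> eigenvalue (supermx L) a ->
    \rank (eigenspace (supermx L) a) = 1%N.

Definition nondegenerate n (A : 'M[C]_n) : Prop :=
  forall a : C, eigenvalue A a -> \rank (eigenspace A a) = 1%N.

Definition sgnsqrt (x : R) : R := Num.sg x * Num.sqrt `|x|.

Definition dephasing_normal_form n (L : 'M[C]_n -> 'M[C]_n)
    (H : 'M[C]_n) (gamma : R) : Prop :=
  [/\ hermitian H, nondegenerate H, \tr H = 0, 0 <= gamma &
      exists sqrtH : 'M[C]_n,
        fcalc H (fun x => ofR (sgnsqrt x)) sqrtH /\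
        forall rho : 'M[C]_n,
          L rho = - (Complex 0 1) *: commmx H rho
                  + ofR (gamma / 2) *: (- commmx sqrtH (commmx sqrtH rho))].

Definition smoothR (f : R -> R) : Prop :=
  forall (k : nat) (x : R), derivable (derive1n k f) x 1.

Definition smoothM m n (M : R -> 'M[C]_(m, n)) : Prop :=
  forall i j, smoothR (fun s => complex.Re (M s i j)) /\ smoothR (fun s => complex.Im (M s i j)).

End LindbladDefs.

(* Main.v *)
Require Import Defs.
From HB Require Import structures.
From mathcomp Require Import all_boot all_order all_algebra.
From mathcomp Require Import all_classical all_reals all_analysis.
From mathcomp.real_closed Require Import complex.
From mathcomp Require Import ring lra.
Import Order.TTheory GRing.Theory Num.Theory.
Local Open Scope ring_scope.

Set Implicit Arguments.
Unset Strict Implicit.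
Unset Printing Implicit Defensive.

Section S.
Variable R : realType.
Local Notation C := R[i].

Definition o0 : 'I_2 := ord0.
Definition o1 : 'I_2 := ord_max.
Lemma ord2E (i : 'I_2) : i = o0 \/ i = o1.
Proof. case: i => [[|[|//]]] Hi; [left|right]; exact: val_inj. Qed.
Lemma sum2 (F : 'I_2 -> C) : \sum_(i < 2) F i = F o0 + F o1.
Proof. rewrite big_ord_recr big_ord1 /=. congr (F _ + F _); exact: val_inj. Qed.

Lemma conjD (x y : C) : Num.conj (x + y) = Num.conj x + Num.conj y. Proof. exact: rmorphD. Qed.
Lemma conjB (x y : C) : Num.conj (x - y) = Num.conj x - Num.conj y. Proof. exact: rmorphB. Qed.
Lemma conjN (x : C) : Num.conj (- x) = - Num.conj x. Proof. exact: rmorphN. Qed.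
Lemma conjM (x y : C) : Num.conj (x * y) = Num.conj x * Num.conj y. Proof. exact: rmorphM. Qed.
Lemma conjV (x : C) : Num.conj (x^-1) = (Num.conj x)^-1. Proof. exact: fmorphV. Qed.
Lemma conjMn (x : C) n : Num.conj (x *+ n) = Num.conj x *+ n. Proof. exact: rmorphMn. Qed.
Lemma conj_nat n : Num.conj (n%:R : C) = n%:R. Proof. exact: rmorph_nat. Qed.
Lemma conj0 : Num.conj (0 : C) = 0. Proof. exact: rmorph0. Qed.
Lemma conj1 : Num.conj (1 : C) = 1. Proof. exact: rmorph1. Qed.
Lemma conjK (x : C) : Num.conj (Num.conj x) = x. Proof. exact: conjCK. Qed.
Lemma conj_ofR (x : R) : Num.conj (ofR x) = ofR x.
Proof. by rewrite /ofR -[Num.conj _]/(conjc _) conjc_real. Qed.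
Lemma conj_sum (I : finType) (F : I -> C) : Num.conj (\sum_i F i) = \sum_i Num.conj (F i).
Proof. exact: rmorph_sum. Qed.

Lemma adjmxE n (A : 'M[C]_n) i j : adjmx A i j = Num.conj (A j i).
Proof. by rewrite /adjmx !mxE. Qed.

Lemma adjmx_lin (Q : 'M[C]_2) (al be : C) : adjmx Q = Q ->
  adjmx (al%:M + be *: Q) = (Num.conj al)%:M + Num.conj be *: Q.
Proof.
move=> hQ; rewrite -{2}hQ; apply/matrixP => i j; rewrite !adjmxE !mxE.
case: (ord2E i) => ->; case: (ord2E j) => -> /=;
rewrite ?mulr1n ?mulr0n ?conjD ?conjM ?conj0 //=.
Qed.

Lemma nat2_neq0 : (2%:R : C) != 0.
Proof. by rewrite pnatr_eq0. Qed.

Lemma lind_term (Q rho : 'M[C]_2) (al be : C) : adjmx Q = Q ->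
  let G := al%:M + be *: Q in
  G *m rho *m adjmx G - 2^-1 *: (adjmx G *m G *m rho + rho *m (adjmx G *m G))
  = (2^-1 * (be * Num.conj al - al * Num.conj be)) *: commmx Q rho
    - (2^-1 * (be * Num.conj be)) *: commmx Q (commmx Q rho).
Proof.
move=> hQ G; rewrite /G adjmx_lin // /commmx.
apply/matrixP => i j; rewrite !(mxE, sum2).
case: (ord2E i) => ->; case: (ord2E j) => -> /=; rewrite ?mulr1n ?mulr0n.
all: by field.
Qed.
End S.

Section S.
Variable R : realType.
Local Notation C := R[i].

Definition Qm (Ht : 'M[C]_2) : 'M[C]_2 := Ht - (\tr Ht / 2%:R)%:M.

Lemma trace2 (A : 'M[C]_2) : \tr A = A o0 o0 + A o1 o1.
Proof. by rewrite /mxtrace sum2. Qed.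

Lemma herm_entry n (A : 'M[C]_n) i j : Defs.hermitian A -> Num.conj (A i j) = A j i.
Proof. by move=> hA; rewrite -[in RHS]hA adjmxE. Qed.

Lemma Qm_herm (Ht : 'M[C]_2) : Defs.hermitian Ht -> adjmx (Qm Ht) = Qm Ht.
Proof.
move=> hH; have h2 : Num.conj (2%:R^-1 : C) = 2%:R^-1 by rewrite conjV conj_nat.
apply/matrixP => i j; rewrite adjmxE !mxE trace2.
rewrite conjB herm_entry // conjMn conjM conjD !herm_entry // h2.
by case: (ord2E i) => ->; case: (ord2E j) => ->.
Qed.

Lemma commmx_Qm (Ht rho : 'M[C]_2) : commmx Ht rho = commmx (Qm Ht) rho.
Proof.
by rewrite /commmx /Qm mulmxBl mulmxBr mul_scalar_mx mul_mx_scalar opprB addrA subrK.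
Qed.

Lemma lindblad_QE (I : finType) (Ht : 'M[C]_2) (G : I -> 'M[C]_2) (al be : I -> C) rho :
  Defs.hermitian Ht -> (forall a, G a = (al a)%:M + be a *: Qm Ht) ->
  lindblad Ht G rho = - 'i%C *: commmx (Qm Ht) rho +
     \sum_a ((2^-1 * (be a * Num.conj (al a) - al a * Num.conj (be a))) *: commmx (Qm Ht) rho
    - (2^-1 * (be a * Num.conj (be a))) *: commmx (Qm Ht) (commmx (Qm Ht) rho)).
Proof.
move=> hH hG; rewrite /lindblad commmx_Qm; congr (_ + _).
apply: eq_bigr => a _; rewrite hG; exact: lind_term (Qm_herm hH).
Qed.

Lemma supermx_rank n k (f : 'M[C]_n -> 'M[C]_n) (lam : C)
  (u : 'I_k -> 'M[C]_n -> C) (P : 'I_k -> 'M[C]_n) :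
  (forall rho, f rho = lam *: rho + \sum_(l < k) u l rho *: P l) ->
  (\rank (supermx f - lam%:M)%R <= k)%N.
Proof.
move=> hf.
have -> : supermx f - lam%:M =
   (\matrix_(i, l) u l (vec_mx (delta_mx 0 i))) *m (\matrix_(l, j) mxvec (P l) 0 j).
  apply/matrixP => i j; rewrite /supermx /lin_mx !mxE /= hf linearD /= linearZ /=.
  rewrite vec_mxK !mxE raddf_sum /= summxE eq_sym mulr_natr addrAC subrr add0r.
  by apply: eq_bigr => l _; rewrite linearZ !mxE.
by apply: leq_trans (mxrankM_maxl _ _) (rank_leq_col _).
Qed.
End S.

Section S.
Variable R : realType.
Local Notation C := R[i].

Lemma scalar0 n : (0 : C)%:M = 0 :> 'M[C]_n.
Proof. by apply/matrixP => i j; rewrite !mxE mul0rn. Qed.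

Lemma mindeg_nonzero (L : 'M[C]_2 -> 'M[C]_2) :
  min_degenerate L -> ~ (forall rho, L rho = 0).
Proof.
case=> hk _ hL.
have := @supermx_rank R _ 0 L 0 (fun _ _ => 0) (fun _ => 0).
rewrite scalar0 subr0 leqn0 mxrank_eq0 => /(_ _)/eqP h.
move: hk; rewrite mxrank_ker h ?mxrank0 //.
by move=> rho; rewrite hL big_ord0 scale0r addr0.
Qed.

Lemma mindeg_noreal (L : 'M[C]_2 -> 'M[C]_2) lam (u : 'I_2 -> 'M[C]_2 -> C) P :
  min_degenerate L -> lam != 0 ->
  ~ (forall rho, L rho = lam *: rho + \sum_(l < 2) u l rho *: P l).
Proof.
case=> _ he hlam hL.
have hr := supermx_rank hL.
have hk : (2 <= \rank (eigenspace (supermx L) lam))%N.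
  by rewrite /eigenspace mxrank_ker; move: hr; case: (\rank _) => [|[|[|]]].
have hev : eigenvalue (supermx L) lam.
  by rewrite /eigenvalue -mxrank_eq0 -lt0n (leq_trans _ hk).
by move: (he lam hlam hev) hk => ->.
Qed.
End S.

Section S.
Variable R : realType.
Local Notation C := R[i].
Local Notation ofR := (@ofR R).

Definition cj n (U X : 'M[C]_n) := U *m X *m adjmx U.

Lemma unitaryV n (U : 'M[C]_n) : unitary U -> adjmx U *m U = 1%:M.
Proof. by move=> hU; apply: mulmx1C. Qed.

Lemma cjD n (U X Y : 'M[C]_n) : cj U (X + Y) = cj U X + cj U Y.
Proof. by rewrite /cj mulmxDr mulmxDl. Qed.
Lemma cjB n (U X Y : 'M[C]_n) : cj U (X - Y) = cj U X - cj U Y.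
Proof. by rewrite /cj mulmxBr mulmxBl. Qed.
Lemma cjZ n (U X : 'M[C]_n) a : cj U (a *: X) = a *: cj U X.
Proof. by rewrite /cj -scalemxAr -scalemxAl. Qed.
Lemma cjS n (U : 'M[C]_n) a : unitary U -> cj U a%:M = a%:M.
Proof. by move=> hU; rewrite /cj mul_mx_scalar -scalemxAl hU scale_scalar_mx mulr1. Qed.
Lemma cjM n (U X Y : 'M[C]_n) : unitary U -> cj U (X *m Y) = cj U X *m cj U Y.
Proof.
move=> hU; rewrite /cj !mulmxA; congr (_ *m _).
by rewrite -[U *m X *m adjmx U *m U]mulmxA unitaryV // mulmx1.
Qed.
Lemma cj_comm n (U X Y : 'M[C]_n) : unitary U -> cj U (commmx X Y) = commmx (cj U X) (cj U Y).
Proof. by move=> hU; rewrite /commmx cjB !cjM. Qed.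
Lemma cj_tr n (U X : 'M[C]_n) : unitary U -> \tr (cj U X) = \tr X.
Proof. by move=> hU; rewrite /cj mxtrace_mulC mulmxA unitaryV // mul1mx. Qed.
Lemma adjmx_adj n (A : 'M[C]_n) : adjmx (adjmx A) = A.
Proof. by apply/matrixP => i j; rewrite !adjmxE conjK. Qed.

Lemma cjK n (U X : 'M[C]_n) : unitary U -> cj U (cj (adjmx U) X) = X.
Proof. by move=> hU; rewrite /cj adjmx_adj !mulmxA hU mul1mx -mulmxA hU mulmx1. Qed.

Lemma spectral2 n (A : 'M[C]_n) : Defs.hermitian A ->
  exists (U : 'M[C]_n) (d : 'rV[R]_n), unitary U /\ A = cj U (diag_mx (map_mx ofR d)).
Proof.
move=> hA.
have hs : A \is hermsymmx.
  apply/is_hermitianmxP; rewrite expr0 scale1r -{1}hA /adjmx.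
  by rewrite map_trmx.
have hP := spectral_unitarymx A.
have /orthomx_spectralP hAe := hermitian_normalmx hs.
have hreal := hermitian_spectral_diag_real hs.
exists (adjmx (spectralmx A)), (map_mx (@complex.Re R) (spectral_diag A)); split.
  rewrite /unitary adjmx_adj; apply: mulmx1C.
  by move/unitarymxP: hP; rewrite /adjmx map_trmx.
have hd : diag_mx (map_mx ofR (map_mx (@complex.Re R) (spectral_diag A))) = diag_mx (spectral_diag A).
  congr diag_mx; apply/matrixP => i j; rewrite !mxE /ofR RRe_real //.
  by move/mxOverP: hreal; apply.
have hPa : map_mx Num.conj ((spectralmx A)^T) = adjmx (spectralmx A) by rewrite /adjmx map_trmx.
rewrite hd /cj adjmx_adj.
by rewrite -hPa -invmx_unitary.
Qed.
End S.

Section S.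
Variable R : realType.
Local Notation C := R[i].
Local Notation ofR := (@ofR R).

Lemma ofRD (x y : R) : ofR (x + y) = ofR x + ofR y. Proof. exact: rmorphD. Qed.
Lemma ofRB (x y : R) : ofR (x - y) = ofR x - ofR y. Proof. exact: rmorphB. Qed.
Lemma ofRN (x : R) : ofR (- x) = - ofR x. Proof. exact: rmorphN. Qed.
Lemma ofRM (x y : R) : ofR (x * y) = ofR x * ofR y. Proof. exact: rmorphM. Qed.
Lemma ofR0 : ofR 0 = 0. Proof. exact: rmorph0. Qed.
Lemma ofR1 : ofR 1 = 1. Proof. exact: rmorph1. Qed.
Lemma ofR_inj : injective ofR. Proof. by move=> x y []. Qed.
Lemma ofR_eq0 (x : R) : (ofR x == 0) = (x == 0).
Proof. by apply/eqP/eqP => [/(congr1 (@complex.Re R))|->] //; rewrite ofR0. Qed.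

Lemma fcalc_lin (Ht G : 'M[C]_2) f : fcalc Ht f G ->
  exists al be, G = al%:M + be *: Qm Ht.
Proof.
case=> U [d [hU hH hG]].
have hH' : Ht = cj U (diag_mx (map_mx ofR d)) := hH.
have hG' : G = cj U (diag_mx (\row_j f (d 0 j))) := hG.
set d1 := d 0 o0; set d2 := d 0 o1.
have htr : \tr Ht = ofR d1 + ofR d2 by rewrite hH' cj_tr // mxtrace_diag sum2 !mxE.
have hQ : Qm Ht = cj U (diag_mx (map_mx ofR d) - (\tr Ht / 2%:R)%:M).
  by rewrite cjB cjS // /Qm -hH'.
case: (eqVneq d1 d2) => hd.
  exists (f d1), 0; rewrite scale0r addr0 hG' -(cjS (f d1) hU); congr (cj U _).
  apply/matrixP => i j; rewrite !mxE.
  by case: (ord2E i) => ->; case: (ord2E j) => -> //=; rewrite -/d2 hd.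
have hd' : ofR d1 - ofR d2 != 0 by rewrite -ofRB ofR_eq0 subr_eq0.
exists ((f d1 + f d2) / 2%:R), ((f d1 - f d2) / (ofR d1 - ofR d2)).
rewrite hQ hG' -cjZ -(cjS _ hU) -cjD; congr (cj U _).
apply/matrixP => i j; rewrite !mxE htr.
case: (ord2E i) => ->; case: (ord2E j) => -> /=; rewrite ?mulr1n ?mulr0n -/d1 -/d2.
- by field; exact: hd'.
- by rewrite subrr mulr0 addr0.
- by rewrite subrr mulr0 addr0.
- by field; exact: hd'.
Qed.
End S.

Section S.
Variable R : realType.
Local Notation C := R[i].
Local Notation ofR := (@ofR R).

Definition tau (Ht : 'M[C]_2) := \tr (Qm Ht *m Qm Ht).
Definition alp (G : 'M[C]_2) := \tr G / 2%:R.
Definition bet (Ht G : 'M[C]_2) := \tr (G *m Qm Ht) / tau Ht.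
Definition kap (I : finType) (Ht : 'M[C]_2) (G : I -> 'M[C]_2) : R :=
  \sum_a complex.Im (bet Ht (G a) * Num.conj (alp (G a))).
Definition mu (I : finType) (Ht : 'M[C]_2) (G : I -> 'M[C]_2) : R :=
  \sum_a (complex.Re (bet Ht (G a)) ^+ 2 + complex.Im (bet Ht (G a)) ^+ 2).
Definition cc (I : finType) (Ht : 'M[C]_2) (G : I -> 'M[C]_2) : R := 1 - kap Ht G.

Lemma ofRV (x : R) : ofR (x^-1) = (ofR x)^-1. Proof. exact: fmorphV. Qed.
Lemma ofR_nat n : ofR n%:R = n%:R. Proof. exact: rmorph_nat. Qed.

Lemma tr_Qm (Ht : 'M[C]_2) : \tr (Qm Ht) = 0.
Proof.
rewrite /Qm linearB /= mxtrace_scalar -[_ / _ *+ 2]mulr_natr divfK ?subrr // pnatr_eq0.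
Qed.

Lemma canon_lin (Ht G : 'M[C]_2) al be : tau Ht != 0 ->
  G = al%:M + be *: Qm Ht -> G = (alp G)%:M + bet Ht G *: Qm Ht.
Proof.
move=> ht hG.
have -> : alp G = al.
  rewrite /alp hG linearD /= linearZ /= tr_Qm mulr0 addr0 mxtrace_scalar.
  by rewrite -[_ *+ 2]mulr_natr mulfK // pnatr_eq0.
have -> : bet Ht G = be.
  rewrite /bet hG mulmxDl mul_scalar_mx -scalemxAl linearD /= !linearZ /= tr_Qm.
  by rewrite mulr0 add0r -/(tau Ht) mulfK.
exact: hG.
Qed.

Lemma cplx_im (z w : C) :
  2^-1 * (z * Num.conj w - w * Num.conj z) = 'i%C * ofR (complex.Im (z * Num.conj w)).
Proof.
have hI : forall x : C, ofR (complex.Im x) = (Num.conj x - x) / 2%:R * 'i%C.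
  by move=> x; exact: ImJ_sub.
rewrite hI conjM conjK mulrCA -expr2 sqr_i.
by field.
Qed.

Lemma cplx_abs (z : C) :
  2^-1 * (z * Num.conj z) = ofR ((complex.Re z ^+ 2 + complex.Im z ^+ 2) / 2%:R).
Proof.
have h : ofR (complex.Re z ^+ 2 + complex.Im z ^+ 2) = z * Num.conj z.
  by rewrite [LHS]add_Re2_Im2 sqr_normc.
by rewrite ofRM ofRV ofR_nat h mulrC.
Qed.

Lemma ofR_sum (I : finType) (F : I -> R) : ofR (\sum_a F a) = \sum_a ofR (F a).
Proof. exact: rmorph_sum. Qed.

Lemma lindblad_canon (I : finType) Ht (G : I -> 'M[C]_2) :
  Defs.hermitian Ht -> tau Ht != 0 ->
  (forall a, exists al be, G a = al%:M + be *: Qm Ht) ->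
  forall rho, lindblad Ht G rho = - ('i%C * ofR (cc Ht G)) *: commmx (Qm Ht) rho
                 - ofR (mu Ht G / 2%:R) *: commmx (Qm Ht) (commmx (Qm Ht) rho).
Proof.
move=> hH ht hG rho.
have hG' : forall a, G a = (alp (G a))%:M + bet Ht (G a) *: Qm Ht.
  by move=> a; case: (hG a) => al [be h]; exact: canon_lin ht h.
rewrite (lindblad_QE rho hH hG').
under eq_bigr => a _ do rewrite cplx_im cplx_abs.
rewrite sumrB -!scaler_suml -mulr_sumr -!ofR_sum -mulr_suml -/(kap Ht G) -/(mu Ht G).
rewrite addrA; congr (_ - _); rewrite -scalerDl; congr (_ *: _).
by rewrite /cc ofRB ofR1 mulrBr mulr1 opprB addrC.
Qed.
End S.

Section S.
Variable R : realType.
Local Notation C := R[i].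
Local Notation ofR := (@ofR R).

Lemma sum2V (V : nmodType) (F : 'I_2 -> V) : \sum_(i < 2) F i = F o0 + F o1.
Proof. rewrite big_ord_recr big_ord1 /=. congr (F _ + F _); exact: val_inj. Qed.

Lemma unitary_adj n (U : 'M[C]_n) : unitary U -> unitary (adjmx U).
Proof. by move=> hU; rewrite /unitary adjmx_adj unitaryV. Qed.

Lemma cjKV n (U X : 'M[C]_n) : unitary U -> cj (adjmx U) (cj U X) = X.
Proof. by move=> hU; rewrite /cj adjmx_adj !mulmxA unitaryV // mul1mx -mulmxA unitaryV // mulmx1. Qed.

Lemma rank_cj n (U X : 'M[C]_n) : unitary U -> \rank (cj U X) = \rank X.
Proof.
move=> hU; apply/eqP; rewrite eqn_leq; apply/andP; split.
  by rewrite /cj (leq_trans (mxrankM_maxl _ _)) // mxrankM_maxr.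
rewrite -{1}(cjKV X hU) /cj.
by rewrite (leq_trans (mxrankM_maxl _ _)) // mxrankM_maxr.
Qed.

Lemma nondeg_cj (U : 'M[C]_2) (d : 'rV[C]_2) : unitary U -> d 0 o0 != d 0 o1 ->
  Defs.nondegenerate (cj U (diag_mx d)).
Proof.
move=> hU hd a; rewrite /eigenvalue /eigenspace mxrank_ker.
have -> : cj U (diag_mx d) - a%:M = cj U (diag_mx d - a%:M) by rewrite cjB cjS.
rewrite rank_cj //.
have hnz : diag_mx d - a%:M != 0.
  apply: contra hd => /eqP /matrixP h.
  move: (h o0 o0) (h o1 o1); rewrite !mxE !eqxx !mulr1n => /eqP; rewrite subr_eq0 => /eqP ->.
  by move/eqP; rewrite subr_eq0 eq_sym.
rewrite -mxrank_eq0 in hnz.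
move: (rank_leq_row (diag_mx d - a%:M)) => hle.
rewrite -mxrank_eq0 mxrank_ker rank_cj //.
by case: (\rank _) hnz hle => [|[|[|]]].
Qed.
End S.

Section S.
Variable R : realType.
Local Notation C := R[i].
Local Notation ofR := (@ofR R).

Lemma sgnsqrtN (x : R) : sgnsqrt (- x) = - sgnsqrt x.
Proof. by rewrite /sgnsqrt sgrN normrN mulNr. Qed.

Lemma sgnsqrt_sq (x : R) : sgnsqrt x ^+ 2 = `|x|.
Proof.
rewrite /sgnsqrt exprMn sqr_sg sqr_sqrtr ?normr_ge0 //.
by case: (eqVneq x 0) => [->|_]; rewrite ?normr0 ?mulr0 ?mul1r.
Qed.

Lemma commcomm_diag (d : 'rV[R]_2) (s : 'M[C]_2) : d 0 o1 = - d 0 o0 ->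
  commmx (diag_mx (map_mx ofR d)) (commmx (diag_mx (map_mx ofR d)) s) =
  ofR (4%:R * d 0 o0 ^+ 2) *: (s - (s o0 o0 *: delta_mx o0 o0 + s o1 o1 *: delta_mx o1 o1)).
Proof.
move=> hd; rewrite /commmx; apply/matrixP => i j; rewrite !(mxE, sum2).
have hX : ofR (d 0 o0 ^+ 2) = ofR (d 0 o0) ^+ 2 by exact: rmorphXn.
rewrite ofRM ofR_nat hX.
case: (ord2E i) => ->; case: (ord2E j) => -> /=; rewrite ?mulr1n ?mulr0n hd ?ofRN.
all: set x := ofR (d 0 o0); ring.
Qed.

Lemma qq_decomp (U : 'M[C]_2) (d : 'rV[R]_2) rho : unitary U -> d 0 o1 = - d 0 o0 ->
  commmx (cj U (diag_mx (map_mx ofR d))) (commmx (cj U (diag_mx (map_mx ofR d))) rho) =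
  ofR (4%:R * d 0 o0 ^+ 2) *: (rho - ((cj (adjmx U) rho) o0 o0 *: cj U (delta_mx o0 o0)
                                 + (cj (adjmx U) rho) o1 o1 *: cj U (delta_mx o1 o1))).
Proof.
move=> hU hd.
rewrite -{1 2}(cjK rho hU) -!cj_comm // commcomm_diag // cjZ cjB cjD !cjZ cjK //.
Qed.
End S.

Section S.
Variable R : realType.
Local Notation C := R[i].
Local Notation ofR := (@ofR R).

Lemma gam_eq (m c r : R) : c != 0 -> r != 0 ->
  (m * Num.sqrt (2%:R * complex.Re (ofR (2%:R * r ^+ 2)) / c ^+ 2) / 2%:R) / 2%:R *
  (sgnsqrt (c * r) / r * (sgnsqrt (c * r) / r)) = m / 2%:R.
Proof.
move=> hc hr.
have -> : complex.Re (ofR (2%:R * r ^+ 2)) = 2%:R * r ^+ 2 by [].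
have -> : 2%:R * (2%:R * r ^+ 2) / c ^+ 2 = (2%:R * r / c) ^+ 2 by field.
rewrite sqrtr_sqr.
have -> : sgnsqrt (c * r) / r * (sgnsqrt (c * r) / r) = `|c * r| / r ^+ 2.
  by rewrite -sgnsqrt_sq; field.
rewrite !normrM normrV ?unitfE // normr_nat -(real_normK (num_real r)).
have hr' : `|r| != 0 by rewrite normr_eq0.
have hc' : `|c| != 0 by rewrite normr_eq0.
by field; rewrite hr' hc'.
Qed.
End S.

Section S.
Variable R : realType.
Local Notation C := R[i].
Local Notation ofR := (@ofR R).

Definition gam (I : finType) (Ht : 'M[C]_2) (G : I -> 'M[C]_2) : R :=
  mu Ht G * Num.sqrt (2%:R * complex.Re (tau Ht) / cc Ht G ^+ 2) / 2%:R.
Definition Hn (I : finType) (Ht : 'M[C]_2) (G : I -> 'M[C]_2) : 'M[C]_2 :=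
  ofR (cc Ht G) *: Qm Ht.

Lemma commZl n (A B : 'M[C]_n) a : commmx (a *: A) B = a *: commmx A B.
Proof. by rewrite /commmx -scalemxAl -scalemxAr scalerBr. Qed.
Lemma commZr n (A B : 'M[C]_n) a : commmx A (a *: B) = a *: commmx A B.
Proof. by rewrite /commmx -scalemxAl -scalemxAr scalerBr. Qed.
Lemma comm0l n (B : 'M[C]_n) : commmx 0 B = 0.
Proof. by rewrite /commmx mul0mx mulmx0 subrr. Qed.

Lemma tau_spec (Ht : 'M[C]_2) (U : 'M[C]_2) (d : 'rV[R]_2) :
  unitary U -> Qm Ht = cj U (diag_mx (map_mx ofR d)) ->
  d 0 o1 = - d 0 o0 /\ tau Ht = ofR (2%:R * d 0 o0 ^+ 2).
Proof.
move=> hU hQ.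
have hd1 : d 0 o1 = - d 0 o0.
  have := tr_Qm Ht; rewrite hQ cj_tr // mxtrace_diag sum2 !mxE -ofRD.
  by move/eqP; rewrite ofR_eq0 addrC addr_eq0 => /eqP.
split => //.
have hX : ofR (d 0 o0 ^+ 2) = ofR (d 0 o0) ^+ 2 by exact: rmorphXn.
rewrite /tau hQ -cjM // cj_tr // trace2 !(mxE, sum2) /= ofRM ofR_nat hX hd1 ofRN.
rewrite ?mulr1n ?mulr0n; set x := ofR (d 0 o0); ring.
Qed.
Lemma adjmxZR n (A : 'M[C]_n) (x : R) : adjmx (ofR x *: A) = ofR x *: adjmx A.
Proof. by apply/matrixP => i j; rewrite adjmxE mxE [in RHS]mxE conjM conj_ofR adjmxE. Qed.

Lemma lind_zeroQ (I : finType) Ht (G : I -> 'M[C]_2) : Defs.hermitian Ht -> Qm Ht = 0 ->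
  (forall a, exists al be, G a = al%:M + be *: Qm Ht) -> forall rho, lindblad Ht G rho = 0.
Proof.
move=> hH hQ hG rho; rewrite /lindblad commmx_Qm hQ comm0l scaler0 add0r.
apply: big1 => a _; case: (hG a) => al [be ->].
move: (lind_term rho al be (Qm_herm hH)) => /= ->.
by rewrite hQ !comm0l !scaler0 subrr.
Qed.

Lemma core (I : finType) Ht (G : I -> 'M[C]_2) :
  dephasing Ht G -> min_degenerate (lindblad Ht G) ->
  [/\ tau Ht = ofR (complex.Re (tau Ht)), 0 < complex.Re (tau Ht), cc Ht G != 0 &
      dephasing_normal_form (lindblad Ht G) (Hn Ht G) (gam Ht G)].
Proof.
case=> hH hf hmd.
have hG : forall a, exists al be, G a = al%:M + be *: Qm Ht.
  by move=> a; case: (hf a) => f /fcalc_lin.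
have [U [d [hU hQ]]] := spectral2 (Qm_herm hH).
have [hd1 htau] := tau_spec hU hQ.
set r := d 0 o0 in hd1 htau.
have hr : r != 0.
  apply/negP => /eqP hr0; apply: (mindeg_nonzero hmd); apply: lind_zeroQ hH _ hG.
  have hD0 : diag_mx (map_mx ofR d) = 0.
    apply/matrixP => i j; rewrite !mxE.
    by case: (ord2E i) => ->; case: (ord2E j) => -> /=; rewrite ?hd1 -/r hr0 ?oppr0 ofR0 ?mulr0n ?mulr1n.
  by rewrite hQ hD0 /cj mulmx0 mul0mx.
have hRe : complex.Re (tau Ht) = 2%:R * r ^+ 2 by rewrite htau.
have htr : tau Ht != 0 by rewrite htau ofR_eq0 mulf_neq0 ?pnatr_eq0 ?expf_neq0.
have hL := lindblad_canon hH htr hG.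
have hcc : cc Ht G != 0.
  apply/negP => /eqP hc0.
  case: (eqVneq (mu Ht G) 0) => hm0.
    apply: (mindeg_nonzero hmd) => rho.
    by rewrite hL hc0 hm0 mul0r ofR0 mulr0 oppr0 !scale0r subrr.
  apply: (mindeg_noreal (lam := - ofR (2%:R * mu Ht G * r ^+ 2))
     (u := fun l rho => ofR (2%:R * mu Ht G * r ^+ 2) * (cj (adjmx U) rho) l l)
     (P := fun l => cj U (delta_mx l l)) hmd).
    by rewrite oppr_eq0 ofR_eq0 !mulf_neq0 ?pnatr_eq0 ?expf_neq0.
  move=> rho; rewrite hL hc0 ofR0 mulr0 oppr0 scale0r sub0r hQ (qq_decomp rho hU hd1) -/r sum2V.
  rewrite scalerA -ofRM.
  have -> : mu Ht G / 2%:R * (4%:R * r ^+ 2) = 2%:R * mu Ht G * r ^+ 2 by field.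
  set k := ofR _.
  by rewrite scalerBr scalerDr !scalerA opprB scaleNr [LHS]addrC.
split.
- by rewrite htau.
- by rewrite hRe mulr_gt0 ?ltr0n // lt_def expf_neq0 // sqr_ge0.
- exact: hcc.
set c := cc Ht G.
set dd := map_mx (fun x => c * x) d.
have hHn : Hn Ht G = cj U (diag_mx (map_mx ofR dd)).
  rewrite /Hn hQ -cjZ; congr (cj U _); apply/matrixP => i j.
  by rewrite !mxE ofRM mulrnAr.
split.
- rewrite /Defs.hermitian.
  by rewrite /Hn adjmxZR Qm_herm.
- rewrite hHn; apply: nondeg_cj => //; rewrite !mxE hd1 -/r.
  by rewrite (inj_eq (@ofR_inj R)) mulrN -subr_eq0 opprK -mulr2n mulrn_eq0 /= mulf_neq0.
- by rewrite /Hn linearZ /= tr_Qm mulr0.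
- rewrite /gam divr_ge0 ?ler0n // mulr_ge0 ?sqrtr_ge0 // sumr_ge0 // => a _.
  by rewrite addr_ge0 ?sqr_ge0.
exists (cj U (diag_mx (\row_j ofR (sgnsqrt (dd 0 j))))); split.
  by exists U, dd; split.
move=> rho.
have hS : cj U (diag_mx (\row_j ofR (sgnsqrt (dd 0 j)))) = ofR (sgnsqrt (c * r) / r) *: Qm Ht.
  rewrite hQ -cjZ; congr (cj U _); apply/matrixP => i j; rewrite !mxE.
  case: (ord2E i) => ->; case: (ord2E j) => -> /=; rewrite ?mulr0n ?mulr1n ?mulr0 //.
  - by rewrite -/r -ofRM divfK.
  - by rewrite hd1 mulrN sgnsqrtN -ofRM mulrN divfK.
rewrite hL hS /Hn !commZl !commZr !scalerA scalerN -!ofRM.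
rewrite /gam htau scalerA -ofRM gam_eq //.
by rewrite mulNr.
Qed.
End S.

Section S.
Variable R : realType.

Definition dall (f : R -> R) := forall x, derivable f x 1.

Lemma dallD (f g : R -> R) : dall f -> dall g -> dall (fun x => f x + g x).
Proof. by move=> hf hg x; apply: derivableD. Qed.
Lemma dallM (f g : R -> R) : dall f -> dall g -> dall (fun x => f x * g x).
Proof. by move=> hf hg x; apply: derivableM. Qed.
Lemma dallN (f : R -> R) : dall f -> dall (fun x => - f x).
Proof. by move=> hf x; apply: derivableN. Qed.
Lemma dallC (c : R) : dall (fun _ => c).
Proof. by move=> x; apply: derivable_cst. Qed.
Lemma dallV (f : R -> R) : dall f -> (forall x, f x != 0) -> dall (fun x => (f x)^-1).
Proof. by move=> hf h0 x; apply: derivableV. Qed.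
Lemma dall_sqrt (f : R -> R) : dall f -> (forall x, 0 < f x) -> dall (fun x => Num.sqrt (f x)).
Proof.
move=> hf h0 x.
have h1 : is_derive x 1 f ('D_1 f x) by apply: derivableP.
have h2 := is_derive1_sqrt (h0 x).
have := @is_derive1_comp R Num.sqrt f x _ _ h2 h1.
by case.
Qed.

Lemma deriv_add (f g : R -> R) : dall f -> dall g ->
  derive1 (fun x => f x + g x) = (fun x => derive1 f x + derive1 g x).
Proof. by move=> hf hg; apply/funext => x; rewrite !derive1E; apply: deriveD. Qed.
Lemma deriv_mul (f g : R -> R) : dall f -> dall g ->
  derive1 (fun x => f x * g x) = (fun x => derive1 f x * g x + f x * derive1 g x).
Proof.
move=> hf hg; apply/funext => x; rewrite !derive1E.
rewrite (deriveM (hf x) (hg x)) /= [LHS]addrC.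
by congr (_ + _); apply: mulrC.
Qed.
Lemma deriv_opp (f : R -> R) : dall f ->
  derive1 (fun x => - f x) = (fun x => - derive1 f x).
Proof. by move=> hf; apply/funext => x; rewrite !derive1E; apply: deriveN. Qed.
Lemma deriv_cst (c : R) : derive1 (fun _ : R => c) = (fun _ => 0).
Proof. by apply/funext => x; rewrite derive1_cst. Qed.
Lemma deriv_inv (f : R -> R) : dall f -> (forall x, f x != 0) ->
  derive1 (fun x => (f x)^-1) = (fun x => - (derive1 f x * ((f x)^-1 * (f x)^-1))).
Proof.
move=> hf h0; apply/funext => x; rewrite !derive1E (deriveV (h0 x) (hf x)).
by rewrite expr2 invfM -[_ *: _]/(_ * _) mulNr mulrC.
Qed.
Lemma deriv_sqrt (f : R -> R) : dall f -> (forall x, 0 < f x) ->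
  derive1 (fun x => Num.sqrt (f x)) = (fun x => derive1 f x * (2 * Num.sqrt (f x))^-1).
Proof.
move=> hf h0; apply/funext => x.
have h1 : is_derive x 1 f ('D_1 f x) by apply: derivableP.
have h2 := is_derive1_sqrt (h0 x).
have h3 := @is_derive1_comp R Num.sqrt f x _ _ h2 h1.
rewrite !derive1E.
have -> : (fun x => Num.sqrt (f x)) = (Num.sqrt \o f) by [].
by rewrite derive_val mulrC.
Qed.

Definition Sm (k : nat) (f : R -> R) := forall j, (j <= k)%N -> dall (derive1n j f).

Lemma Sm0 f : Sm 0 f <-> dall f.
Proof.
split=> [h|h [|j] hj]; first exact: (h 0%N (leqnn 0)); first exact: h.
exfalso; by move: hj; rewrite ltn0.
Qed.

Lemma SmS k f : Sm k.+1 f <-> dall f /\ Sm k (derive1 f).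
Proof.
split=> [h|[h0 h] [|j] hj].
  split; first exact: (h 0%N (leq0n _)).
  move=> j hj; rewrite -derive1Sn; exact: (h j.+1 hj).
  exact: h0.
rewrite derive1Sn; exact: (h j hj).
Qed.

Lemma Sm_le k f : Sm k.+1 f -> Sm k f.
Proof. by move=> h j hj; apply: h; rewrite (leq_trans hj). Qed.

Lemma SmC k (c : R) : Sm k (fun _ => c).
Proof.
elim: k c => [|k IH] c; first by apply/Sm0; exact: dallC.
by apply/SmS; split; [exact: dallC | rewrite deriv_cst; apply: IH].
Qed.

Lemma SmD k (f g : R -> R) : Sm k f -> Sm k g -> Sm k (fun x => f x + g x).
Proof.
elim: k f g => [|k IH] f g.
  by move=> /Sm0 hf /Sm0 hg; apply/Sm0; exact: dallD.
move=> /SmS [hf0 hf] /SmS [hg0 hg]; apply/SmS; split; first exact: dallD.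
by rewrite (deriv_add hf0 hg0); apply: IH.
Qed.

Lemma SmN k (f : R -> R) : Sm k f -> Sm k (fun x => - f x).
Proof.
elim: k f => [|k IH] f.
  by move=> /Sm0 hf; apply/Sm0; exact: dallN.
move=> /SmS [hf0 hf]; apply/SmS; split; first exact: dallN.
by rewrite (deriv_opp hf0); apply: IH.
Qed.

Lemma SmM k (f g : R -> R) : Sm k f -> Sm k g -> Sm k (fun x => f x * g x).
Proof.
elim: k f g => [|k IH] f g.
  by move=> /Sm0 hf /Sm0 hg; apply/Sm0; exact: dallM.
move=> hfS hgS; have [hf0 hf] := iffLR (SmS _ _) hfS; have [hg0 hg] := iffLR (SmS _ _) hgS.
apply/SmS; split; first exact: dallM.
rewrite (deriv_mul hf0 hg0).
apply: (SmD (f := fun x => derive1 f x * g x) (g := fun x => f x * derive1 g x)).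
  exact: (IH (derive1 f) g hf (Sm_le hgS)).
exact: (IH f (derive1 g) (Sm_le hfS) hg).
Qed.

Lemma SmV k (f : R -> R) : Sm k f -> (forall x, f x != 0) -> Sm k (fun x => (f x)^-1).
Proof.
elim: k f => [|k IH] f.
  by move=> /Sm0 hf h0; apply/Sm0; exact: dallV.
move=> hfS h0; have [hf0 hf] := iffLR (SmS _ _) hfS.
apply/SmS; split; first exact: dallV.
rewrite (deriv_inv hf0 h0).
apply: (SmN (f := fun x => derive1 f x * ((f x)^-1 * (f x)^-1))).
apply: (SmM (f := derive1 f) (g := fun x => (f x)^-1 * (f x)^-1) hf).
have hV := IH f (Sm_le hfS) h0.
exact: (SmM hV hV).
Qed.

Lemma Sm_sqrt k (f : R -> R) : Sm k f -> (forall x, 0 < f x) -> Sm k (fun x => Num.sqrt (f x)).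
Proof.
elim: k f => [|k IH] f.
  by move=> /Sm0 hf h0; apply/Sm0; exact: dall_sqrt.
move=> hfS h0; have [hf0 hf] := iffLR (SmS _ _) hfS.
apply/SmS; split; first exact: dall_sqrt.
rewrite (deriv_sqrt hf0 h0).
apply: (SmM (f := derive1 f) (g := fun x => (2 * Num.sqrt (f x))^-1) hf).
have hs := IH f (Sm_le hfS) h0.
have h2 := SmM (@SmC k 2) hs.
apply: (SmV (f := fun x => 2 * Num.sqrt (f x)) h2).
by move=> x; rewrite mulf_neq0 ?pnatr_eq0 // gt_eqF // sqrtr_gt0.
Qed.

Lemma Sm_id k : Sm k (fun x : R => x).
Proof.
case: k => [|k]; first by apply/Sm0 => x; exact: derivable_id.
apply/SmS; split; first by move=> x; exact: derivable_id.
have -> : derive1 (fun x : R => x) = (fun _ => 1).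
  by apply/funext => x; rewrite derive1E derive_id.
exact: SmC.
Qed.

Lemma smoothR_Sm (f : R -> R) : smoothR f <-> forall k, Sm k f.
Proof.
split=> [h k j _ x|h k x]; first exact: h.
exact: (h k k (leqnn k)).
Qed.
End S.


Section S.
Variable R : realType.
Local Notation C := R[i].
Local Notation ofR := (@ofR R).

Definition smR (f : R -> R) := forall k, Sm k f.

Lemma smRC (c : R) : smR (fun _ => c). Proof. by move=> k; exact: SmC. Qed.
Arguments smRC : clear implicits.
Lemma smR_id : smR (fun x => x). Proof. by move=> k; exact: Sm_id. Qed.
Lemma smRD f g : smR f -> smR g -> smR (fun x => f x + g x).
Proof. by move=> hf hg k; exact: SmD. Qed.
Lemma smRM f g : smR f -> smR g -> smR (fun x => f x * g x).
Proof. by move=> hf hg k; exact: SmM. Qed.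
Lemma smRN f : smR f -> smR (fun x => - f x).
Proof. by move=> hf k; exact: SmN. Qed.
Lemma smRB f g : smR f -> smR g -> smR (fun x => f x - g x).
Proof. by move=> hf hg; exact: (smRD hf (smRN hg)). Qed.
Lemma smRV f : smR f -> (forall x, f x != 0) -> smR (fun x => (f x)^-1).
Proof. by move=> hf h k; exact: SmV. Qed.
Lemma smR_sqrt f : smR f -> (forall x, 0 < f x) -> smR (fun x => Num.sqrt (f x)).
Proof. by move=> hf h k; exact: Sm_sqrt. Qed.
Lemma smR_ext f g : smR f -> f =1 g -> smR g.
Proof. by move=> h e; have <- : f = g by apply/funext. Qed.

Lemma smR_sum (I : finType) (F : I -> R -> R) :
  (forall a, smR (F a)) -> smR (fun s => \sum_a F a s).
Proof.
move=> h.
have : forall r : seq I, smR (fun s => \sum_(a <- r) F a s).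
  elim=> [|x r IH].
    by apply: (smR_ext (smRC 0)) => s; rewrite big_nil.
  apply: (smR_ext (smRD (h x) IH)).
  by move=> s; rewrite big_cons.
by move/(_ (index_enum I)).
Qed.

Lemma smoothR_smR f : smoothR f <-> smR f.
Proof. exact: smoothR_Sm. Qed.

Definition smC (h : R -> C) := smR (fun s => complex.Re (h s)) /\ smR (fun s => complex.Im (h s)).

Lemma smC_ext f g : smC f -> f =1 g -> smC g.
Proof. by move=> h e; have <- : f = g by apply/funext. Qed.
Lemma smCC (c : C) : smC (fun _ => c). Proof. by split; apply: smRC. Qed.
Arguments smCC : clear implicits.
Lemma smC_ofR f : smR f -> smC (fun s => ofR (f s)).
Proof. by move=> h; split; [exact: h | exact: (smRC 0)]. Qed.
Lemma smCD f g : smC f -> smC g -> smC (fun x => f x + g x).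
Proof.
case=> h1 h2 [h3 h4]; split.
  by apply: (smR_ext (smRD h1 h3)) => s; case: (f s); case: (g s).
by apply: (smR_ext (smRD h2 h4)) => s; case: (f s); case: (g s).
Qed.
Lemma smCN f : smC f -> smC (fun x => - f x).
Proof.
case=> h1 h2; split.
  by apply: (smR_ext (smRN h1)) => s; case: (f s).
by apply: (smR_ext (smRN h2)) => s; case: (f s).
Qed.
Lemma smCB f g : smC f -> smC g -> smC (fun x => f x - g x).
Proof. by move=> hf hg; exact: (smCD hf (smCN hg)). Qed.
Lemma smCM f g : smC f -> smC g -> smC (fun x => f x * g x).
Proof.
case=> h1 h2 [h3 h4]; split.
  by apply: (smR_ext (smRB (smRM h1 h3) (smRM h2 h4))) => s; case: (f s); case: (g s).
by apply: (smR_ext (smRD (smRM h1 h4) (smRM h2 h3))) => s; case: (f s); case: (g s).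
Qed.
Lemma smC_conj f : smC f -> smC (fun x => Num.conj (f x)).
Proof.
case=> h1 h2; split.
  by apply: (smR_ext h1) => s; case: (f s).
by apply: (smR_ext (smRN h2)) => s; case: (f s).
Qed.
Lemma smC_sum (I : finType) (F : I -> R -> C) :
  (forall a, smC (F a)) -> smC (fun s => \sum_a F a s).
Proof.
move=> h.
have : forall r : seq I, smC (fun s => \sum_(a <- r) F a s).
  elim=> [|x r IH].
    by apply: (smC_ext (smCC 0)) => s; rewrite big_nil.
  apply: (smC_ext (smCD (h x) IH)).
  by move=> s; rewrite big_cons.
by move/(_ (index_enum I)).
Qed.
Lemma smC_Re f : smC f -> smR (fun s => complex.Re (f s)). Proof. by case. Qed.
Lemma smC_Im f : smC f -> smR (fun s => complex.Im (f s)). Proof. by case. Qed.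
End S.

Section S.
Variable R : realType.
Local Notation C := R[i].
Local Notation ofR := (@ofR R).

Definition smM (M : R -> 'M[C]_2) := forall i j, smC (fun s => M s i j).

Lemma smM_smoothM M : smM M -> smoothM M.
Proof. by move=> h i j; case: (h i j) => h1 h2; split; apply/smoothR_smR. Qed.
Lemma smoothM_smM M : smoothM M -> smM M.
Proof. by move=> h i j; case: (h i j) => h1 h2; split; apply/smoothR_smR. Qed.

Lemma smMD (A B : R -> 'M[C]_2) : smM A -> smM B -> smM (fun s => A s + B s).
Proof. by move=> hA hB i j; apply: (smC_ext (smCD (hA i j) (hB i j))) => s; rewrite mxE. Qed.
Lemma smMB (A B : R -> 'M[C]_2) : smM A -> smM B -> smM (fun s => A s - B s).
Proof. by move=> hA hB i j; apply: (smC_ext (smCB (hA i j) (hB i j))) => s; rewrite !mxE. Qed.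
Lemma smMmul (A B : R -> 'M[C]_2) : smM A -> smM B -> smM (fun s => A s *m B s).
Proof.
move=> hA hB i j.
apply: (smC_ext (smCD (smCM (hA i o0) (hB o0 j)) (smCM (hA i o1) (hB o1 j)))) => s.
by rewrite mxE sum2.
Qed.
Lemma smMZ (a : R -> C) (A : R -> 'M[C]_2) : smC a -> smM A -> smM (fun s => a s *: A s).
Proof. by move=> ha hA i j; apply: (smC_ext (smCM ha (hA i j))) => s; rewrite mxE. Qed.
Lemma smM_scalar (a : R -> C) : smC a -> smM (fun s => (a s)%:M).
Proof.
move=> ha i j; case: (eqVneq i j) => [->|hij].
  by apply: (smC_ext ha) => s; rewrite mxE eqxx mulr1n.
by apply: (smC_ext (smCC 0)) => s; rewrite mxE (negPf hij) mulr0n.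
Qed.
Lemma smC_tr (A : R -> 'M[C]_2) : smM A -> smC (fun s => \tr (A s)).
Proof. by move=> hA; apply: (smC_ext (smCD (hA o0 o0) (hA o1 o1))) => s; rewrite trace2. Qed.
End S.

Section S.
Variable R : realType.
Local Notation C := R[i].
Local Notation ofR := (@ofR R).

Lemma smooth_all (I : finType) (Ht : R -> 'M[C]_2) (G : R -> I -> 'M[C]_2) :
  smM Ht -> (forall a, smM (fun s => G s a)) ->
  (forall s, tau (Ht s) = ofR (complex.Re (tau (Ht s)))) ->
  (forall s, 0 < complex.Re (tau (Ht s))) -> (forall s, cc (Ht s) (G s) != 0) ->
  smM (fun s => Hn (Ht s) (G s)) /\ smR (fun s => gam (Ht s) (G s)).
Proof.
move=> hH hG htr hpos hcc.
have hQ : smM (fun s => Qm (Ht s)).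
  exact: (smMB hH (smM_scalar (smCM (smC_tr hH) (@smCC R (2%:R^-1))))).
have htau : smC (fun s => tau (Ht s)) := smC_tr (smMmul hQ hQ).
have hRt : smR (fun s => complex.Re (tau (Ht s))) := smC_Re htau.
have hRtV : smR (fun s => (complex.Re (tau (Ht s)))^-1).
  by apply: smRV hRt _ => s; rewrite gt_eqF.
have hbet : forall a, smC (fun s => bet (Ht s) (G s a)).
  move=> a; apply: (smC_ext (smCM (smC_tr (smMmul (hG a) hQ)) (smC_ofR hRtV))) => s.
  by rewrite /bet ofRV -htr.
have halp : forall a, smC (fun s => alp (G s a)).
  by move=> a; exact: (smCM (smC_tr (hG a)) (@smCC R 2%:R^-1)).
have hkap : smR (fun s => kap (Ht s) (G s)).
  exact: (smR_sum (F := fun a s => complex.Im (bet (Ht s) (G s a) * Num.conj (alp (G s a))))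
     (fun a => smC_Im (smCM (hbet a) (smC_conj (halp a))))).
have hmu : smR (fun s => mu (Ht s) (G s)).
  apply: (smR_ext (smR_sum (F := fun a s => complex.Re (bet (Ht s) (G s a)) * complex.Re (bet (Ht s) (G s a))
       + complex.Im (bet (Ht s) (G s a)) * complex.Im (bet (Ht s) (G s a)))
     (fun a => smRD (smRM (smC_Re (hbet a)) (smC_Re (hbet a))) (smRM (smC_Im (hbet a)) (smC_Im (hbet a)))))).
  by move=> s; rewrite /mu; apply: eq_bigr => a _; rewrite !expr2.
have hc : smR (fun s => cc (Ht s) (G s)) := smRB (@smRC R 1) hkap.
have hc2 : smR (fun s => cc (Ht s) (G s) ^+ 2).
  by apply: (smR_ext (smRM hc hc)) => s; rewrite expr2.
have hc2V : smR (fun s => (cc (Ht s) (G s) ^+ 2)^-1).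
  by apply: smRV hc2 _ => s /=; apply: expf_neq0.
have hin : smR (fun s => 2%:R * complex.Re (tau (Ht s)) / cc (Ht s) (G s) ^+ 2).
  exact: (smRM (smRM (@smRC R 2%:R) hRt) hc2V).
have hinpos : forall s, 0 < 2%:R * complex.Re (tau (Ht s)) / cc (Ht s) (G s) ^+ 2.
  move=> s; apply: divr_gt0; first by apply: mulr_gt0; [rewrite ltr0n | exact: hpos].
  by rewrite lt_def (expf_neq0 _ (hcc s)) sqr_ge0.
split; first exact: (smMZ (smC_ofR hc) hQ).
exact: (smRM (smRM hmu (smR_sqrt hin hinpos)) (@smRC R 2%:R^-1)).
Qed.
End S.

Unset Implicit Arguments.
Set Strict Implicit.

Theorem lemma3p1 (R : realType) :
  (forall (I : finType) (Ht : 'M[R[i]]_2) (G : I -> 'M[R[i]]_2),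
      dephasing Ht G -> min_degenerate (lindblad Ht G) ->
      exists (H : 'M[R[i]]_2) (gamma : R),
        dephasing_normal_form (lindblad Ht G) H gamma)
  /\
  (forall (I : finType) (Ht : R -> 'M[R[i]]_2) (G : R -> I -> 'M[R[i]]_2),
      smoothM Ht -> (forall a : I, smoothM (fun s => G s a)) ->
      (forall s : R, dephasing (Ht s) (G s) /\ min_degenerate (lindblad (Ht s) (G s))) ->
      exists (H : R -> 'M[R[i]]_2) (gamma : R -> R),
        smoothM H /\ smoothR gamma /\
        forall s : R, dephasing_normal_form (lindblad (Ht s) (G s)) (H s) (gamma s)).
Proof.
split.
  move=> I Ht G hd hm; have [_ _ _ hn] := core hd hm.
  by exists (Hn Ht G), (gam Ht G).
move=> I Ht G hH hG hs.
have hc : forall s, _ := fun s => core (hs s).1 (hs s).2.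
have [hM hR] := smooth_all (smoothM_smM hH) (fun a => smoothM_smM (hG a))
  (fun s => let: And4 x _ _ _ := hc s in x) (fun s => let: And4 _ x _ _ := hc s in x)
  (fun s => let: And4 _ _ x _ := hc s in x).
exists (fun s => Hn (Ht s) (G s)), (fun s => gam (Ht s) (G s)); split.
  exact: smM_smoothM.
split; first exact/smoothR_smR.
by move=> s; case: (hc s).
Qed.
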